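(* Let $\mathcal{B}$ be a denumerable and measurable partition of $\Omega$ with $\underline{P}(B)>0$ for every $B\in\mathcal{B}$, and let $\Pi$ be the set of probability measures compatible with $\underline{P}$. For any event $A\in\mathscr{B}(\Omega)$, under the generalized Bayes rule, (i) $\mathcal{B}$ cannot induce sure loss in $A$, and (ii) $\mathcal{B}$ cannot contract $A$.
   Context: $\Omega$ is a separable, completely metrizable space with Borel $\sigma$-algebra $\mathscr{B}(\Omega)$; $\underline{P}$ is a Choquet capacity of order 2 on $\mathscr{B}(\Omega)$ (a coherent lower probability with weakly compact set of dominating measures satisfying $\underline{P}(A\cup B)\ge\underline{P}(A)+\underline{P}(B)-\underline{P}(A\cap B)$); $\Pi=\{P:P\ge\underline{P}\}$, $\underline{P}(A)=\inf_{P\in\Pi}P(A)$, $\overline{P}(A)=\sup_{P\in\Pi}P(A)=1-\underline{P}(A^c)$. Generalized Bayes rule: $\underline{P}_{\mathfrak{B}}(A\mid B)=\inf_{P\in\Pi}P(A\cap B)/P(B)$, $\overline{P}_{\mathfrak{B}}(A\mid B)=\sup_{P\in\Pi}P(A\cap B)/P(B)$. For an updating rule with conditional lower/upper probabilities $\underline{P}_\bullet,\overline{P}_\bullet$: $\mathcal{B}$ induces sure loss in $A$ if $\inf_{B\in\mathcal{B}}\underline{P}_\bullet(A\mid B)>\overline{P}(A)$ or $\sup_{B\in\mathcal{B}}\overline{P}_\bullet(A\mid B)<\underline{P}(A)$. $\mathcal{B}$ strictly contracts $A$ if $\underline{P}(A)<\inf_{B\in\mathcal{B}}\underline{P}_\bullet(A\mid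 B)\le\sup_{B\in\mathcal{B}}\overline{P}_\bullet(A\mid B)<\overline{P}(A)$; $\mathcal{B}$ contracts $A$ if this holds with either (but not both) of the two outer strict inequalities allowed to be an equality. *)

(* Defs.v *)
From HB Require Import structures.
From mathcomp Require Import all_boot all_order all_algebra.
From mathcomp Require Import all_classical all_reals all_analysis.
Set Implicit Arguments. Unset Strict Implicit. Unset Printing Implicit Defensive.
Import Order.TTheory GRing.Theory Num.Theory.
Import numFieldNormedType.Exports.
Local Open Scope classical_set_scope.
Local Open Scope ring_scope.

Definition borel_type {R : realType} (Omega : completePseudoMetricType R) :=
  g_sigma_algebraType (@open Omega).

(* Omega is separable and completely metrizable (it carries a complete metric,
   Hausdorff so the pseudometric is a metric). *)
Definition separable_complete_metric {R : realType}
    (Omega : completePseudoMetricType R) : Prop :=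
  hausdorff_space Omega /\ exists S : set Omega, countable S /\ dense S.

Section Imprecise.
Variables (R : realType) (Omega : completePseudoMetricType R).
Local Notation T := (borel_type Omega).
Local Notation prob := (probability T R).

Definition credal (lowP : set T -> R) : set prob :=
  [set P | forall A, measurable A -> ((lowP A)%:E <= P A)%E].

Definition upper (lowP : set T -> R) (A : set T) : \bar R :=
  ereal_sup [set P A | P in credal lowP].

Definition bcontinuous (f : Omega -> R) : Prop :=
  continuous f /\ exists M : R, forall x, `|f x| <= M.

Definition weak_nbhs (P : prob) (N : set prob) : Prop :=
  exists (n : nat) (f : nat -> Omega -> R) (e : R),
    0 < e /\ (forall i, (i < n)%N -> bcontinuous (f i)) /\
    [set Q : prob | forall i, (i < n)%N ->
       `|Rintegral Q setT (f i) - Rintegral P setT (f i)| < e] `<=` N.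

Definition weakly_compact (S : set prob) : Prop :=
  forall F : set_system prob, ProperFilter F -> F S ->
    exists2 P, S P & forall N A, weak_nbhs P N -> F A -> N `&` A !=set0.

(* Choquet capacity of order 2: coherent lower probability (lower envelope of
   Pi), Pi weakly compact, and 2-monotone. *)
Definition choquet_capacity2 (lowP : set T -> R) : Prop :=
  [/\ forall A, measurable A ->
        (lowP A)%:E = ereal_inf [set P A | P in credal lowP],
      weakly_compact (credal lowP) &
      forall A B, measurable A -> measurable B ->
        lowP A + lowP B - lowP (A `&` B) <= lowP (A `|` B)].

Definition cond_ratio (P : prob) (A B : set T) : R :=
  fine (P (A `&` B)) / fine (P B).

Definition lowGBR (lowP : set T -> R) (A B : set T) : \bar R :=
  ereal_inf [set (cond_ratio P A B)%:E | P in credal lowP].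

Definition upGBR (lowP : set T -> R) (A B : set T) : \bar R :=
  ereal_sup [set (cond_ratio P A B)%:E | P in credal lowP].

Definition measurable_partition (B : nat -> set T) : Prop :=
  [/\ forall n, measurable (B n), trivIset setT B & \bigcup_n B n = setT].

(* Sure loss / contraction for an updating rule (lowc, upc), with
   unconditional lower/upper probabilities lowA, upA of the event A. *)
Definition induces_sure_loss (lowc upc : set T -> set T -> \bar R)
    (lowA upA : \bar R) (B : nat -> set T) (A : set T) : Prop :=
  (upA < ereal_inf (range (fun n => lowc A (B n))))%E \/
  (ereal_sup (range (fun n => upc A (B n))) < lowA)%E.

Definition strictly_contracts (lowc upc : set T -> set T -> \bar R)
    (lowA upA : \bar R) (B : nat -> set T) (A : set T) : Prop :=
  let i := ereal_inf (range (fun n => lowc A (B n))) in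
  let s := ereal_sup (range (fun n => upc A (B n))) in
  (lowA < i)%E /\ (i <= s)%E /\ (s < upA)%E.

Definition contracts (lowc upc : set T -> set T -> \bar R)
    (lowA upA : \bar R) (B : nat -> set T) (A : set T) : Prop :=
  let i := ereal_inf (range (fun n => lowc A (B n))) in
  let s := ereal_sup (range (fun n => upc A (B n))) in
  ((lowA <= i)%E /\ (i <= s)%E /\ (s < upA)%E) \/
  ((lowA < i)%E /\ (i <= s)%E /\ (s <= upA)%E).

End Imprecise.

(* Main.v *)
Require Import Defs.
From HB Require Import structures.
From mathcomp Require Import all_boot all_order all_algebra.
From mathcomp Require Import all_classical all_reals all_analysis.
Import Order.TTheory GRing.Theory Num.Theory.
Local Open Scope classical_set_scope.
Local Open Scope ring_scope.

Section H.
Context (d : measure_display) (T : measurableType d) (R : realType).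
Variables (P : probability T R) (A : set T) (B : nat -> set T).
Hypotheses (mA : measurable A) (mB : forall n, measurable (B n))
  (tB : trivIset setT B) (cB : \bigcup_n B n = setT).

Lemma serA : P A = (\sum_(0 <= n <oo) P (A `&` B n))%E.
Proof.
have eA : A = \bigcup_n (A `&` B n) by rewrite -setI_bigcupr cB setIT.
rewrite {1}eA measure_semi_bigcup //.
- by move=> n; exact: measurableI.
- by apply: trivIset_setIl.
- by rewrite -eA.
Qed.

Lemma serT : (\sum_(0 <= n <oo) P (B n))%E = 1%E.
Proof.
rewrite -(measure_semi_bigcup P mB tB) ?cB ?probability_setT //.
exact: probability_setT.
Qed.

Hypothesis pB : forall n, 0 < fine (P (B n)).

Let fPB n : P (B n) = (fine (P (B n)))%:E.
Proof. by rewrite fineK //; apply: fin_num_measure. Qed.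
Let fPAB n : P (A `&` B n) = (fine (P (A `&` B n)))%:E.
Proof. by rewrite fineK //; apply: fin_num_measure; exact: measurableI. Qed.

Lemma lb_cond (c : \bar R) :
  (forall n, c <= (fine (P (A `&` B n)) / fine (P (B n)))%:E)%E -> (c <= P A)%E.
Proof.
case: c => [c| |] H.
- have [c0|c0] := lerP c 0.
    by apply: (le_trans (_ : c%:E <= 0)%E); rewrite ?lee_fin //.
  rewrite serA -(mule1 c%:E) -serT -nneseriesZl //.
  apply: lee_nneseries => [i _ _|n _].
    by rewrite mule_ge0 // lee_fin ltW.
  rewrite fPB fPAB -EFinM lee_fin -ler_pdivlMr //.
  by have := H n; rewrite lee_fin.
- by have := H 0%N; rewrite leye_eq.
- by rewrite leNye.
Qed.

Lemma ub_cond (c : \bar R) :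
  (forall n, (fine (P (A `&` B n)) / fine (P (B n)))%:E <= c)%E -> (P A <= c)%E.
Proof.
case: c => [c| |] H.
- rewrite serA -(mule1 c%:E) -serT -nneseriesZl //.
  apply: lee_nneseries => [i _ _|n _] //.
  rewrite fPB fPAB -EFinM lee_fin -ler_pdivrMr //.
  by have := H n; rewrite lee_fin.
- by rewrite leey.
- by have := H 0%N; rewrite leeNy_eq.
Qed.
End H.

Theorem theorem5p2 (R : realType) (Omega : completePseudoMetricType R)
  (lowP : set (borel_type Omega) -> R) (B : nat -> set (borel_type Omega)) :
  separable_complete_metric Omega ->
  choquet_capacity2 lowP ->
  measurable_partition B ->
  (forall n, 0 < lowP (B n)) ->
  forall A : set (borel_type Omega), measurable A ->
    ~ induces_sure_loss (lowGBR lowP) (upGBR lowP)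
        (lowP A)%:E (upper lowP A) B A /\
    ~ contracts (lowGBR lowP) (upGBR lowP)
        (lowP A)%:E (upper lowP A) B A.
Proof.
move=> _ [Hlow _ _] [mB tB cB] pos A mA.
set i := ereal_inf (range (fun n => lowGBR lowP A (B n))).
set s := ereal_sup (range (fun n => upGBR lowP A (B n))).
have cpB : forall P, credal lowP P -> forall n, 0 < fine (P (B n)).
  move=> P cP n.
  have := cP _ (mB n); rewrite -(@fineK _ (P (B n))); last first.
    by apply: fin_num_measure.
  by rewrite lee_fin => h; exact: lt_le_trans (pos n) h.
have F1 : forall P, credal lowP P -> (i <= P A)%E.
  move=> P cP; apply: lb_cond => // [n|n]; first exact: cpB.
  apply: (@le_trans _ _ (lowGBR lowP A (B n))); first by apply: ereal_inf_lbound; exists n.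
  by apply: ereal_inf_lbound; exists P.
have F2 : forall P, credal lowP P -> (P A <= s)%E.
  move=> P cP; apply: ub_cond => // [n|n]; first exact: cpB.
  apply: (@le_trans _ _ (upGBR lowP A (B n))); last by apply: ereal_sup_ubound; exists n.
  by apply: ereal_sup_ubound; exists P.
have [P0 cP0] : exists P, credal lowP P.
  have [//|hne] := pselect (exists P, credal lowP P); exfalso.
  have := Hlow _ (@measurableT _ (borel_type Omega)).
  suff -> : ereal_inf [set P setT | P in credal lowP] = +oo%E by [].
  apply/eqP; rewrite -leye_eq; apply: le_ereal_inf_tmp.
  by move=> y [P cP] _; exfalso; exact: hne (ex_intro _ P cP).
have lowA : ((lowP A)%:E <= P0 A)%E by apply: cP0.
have upA : (P0 A <= upper lowP A)%E by apply: ereal_sup_ubound; exists P0.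
split.
- case => H.
  + have : (i <= upper lowP A)%E by exact: le_trans (F1 _ cP0) upA.
    by rewrite leNgt H.
  + have : ((lowP A)%:E <= s)%E by exact: le_trans lowA (F2 _ cP0).
    by rewrite leNgt H.
- rewrite /contracts -/i -/s.
  case => [[_ [_ H]] | [H _]].
  + have : (upper lowP A <= s)%E.
      by apply: ge_ereal_sup => _ [P cP <-]; exact: F2.
    by rewrite leNgt H.
  + have : (i <= (lowP A)%:E)%E.
      rewrite Hlow //; apply: le_ereal_inf_tmp => _ [P cP <-]; exact: F1.
    by rewrite leNgt H.
Qed.
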